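(* Let $\mathcal{P} \subseteq \{2,3,4,\dots\}$ be nonempty, let $\varrho$ be the minimal element of $\mathcal{P}$, and let $s \geq 0$ be real with $s>\sigma_\mathcal{P}$. Then for all integers $n\geq 2$ and $k \geq 1$, $$H_k(n,\mathcal{P}) \leq \frac{\zeta_\mathcal{P}(s)^{k-1}\, n^s}{\varrho^s}.$$
   Context: For $\mathcal{P} \subseteq \{2,3,\dots\}$ and $k\ge1$, $H_k(n,\mathcal{P})$ is the number of ordered $k$-tuples $(d_1,\dots,d_k)$ with $d_1\cdots d_k = n$ and every $d_i \in \mathcal{P}$ (so $H_1(n,\mathcal{P})=1$ if $n\in\mathcal{P}$ and $0$ otherwise). $\zeta_\mathcal{P}(s)=\sum_{m\in\mathcal{P}} m^{-s}$, and $\sigma_\mathcal{P}$ is its abscissa of convergence ($-\infty$ if $\mathcal{P}$ is finite). *)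

(* Defs.v *)
From HB Require Import structures.
From mathcomp Require Import all_boot all_order all_algebra.
From mathcomp Require Import all_classical all_reals all_analysis.
Set Implicit Arguments. Unset Strict Implicit. Unset Printing Implicit Defensive.
Import Order.TTheory GRing.Theory Num.Theory.
Import numFieldNormedType.Exports.
Local Open Scope ring_scope.

(* H_k(n,P): number of ordered k-tuples (d_1,...,d_k) of naturals with
   d_1 * ... * d_k = n and every d_i in P.  For n >= 1 every d_i divides n,
   hence d_i <= n, so tuples over 'I_n.+1 enumerate all of them. *)
Definition Hk (P : pred nat) (k n : nat) : nat :=
  #|[set t : k.-tuple 'I_n.+1 |
       ((\prod_(i <- t) (nat_of_ord i))%N == n) && all (fun i : 'I_n.+1 => P i) t]|.

Definition zetaP_term {R : realType} (P : pred nat) (s : R) (m : nat) : R :=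
  if P m then (m%:R : R) `^ (- s) else 0.

Definition zetaP {R : realType} (P : pred nat) (s : R) : R :=
  limn (series (zetaP_term P s) : R^nat).

Definition sigmaP {R : realType} (P : pred nat) : \bar R :=
  ereal_inf [set (t%:E : \bar R) | t in [set t : R | cvgn (series (zetaP_term P t) : R^nat)]].

(* Main.v *)
Require Import Defs.
From HB Require Import structures.
From mathcomp Require Import all_boot all_order all_algebra.
From mathcomp Require Import all_classical all_reals all_analysis.
From mathcomp Require Import ring lra.
Import Order.TTheory GRing.Theory Num.Theory.
Import numFieldNormedType.Exports.
Local Open Scope ring_scope.

Section S.
Variables (R : realType) (P : pred nat).

Definition G (N k m : nat) : R :=
  \sum_(t : k.-tuple 'I_N.+1)
     (((\prod_(i <- t) (nat_of_ord i))%N == m) && all (fun i : 'I_N.+1 => P i) t)%:R.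

Lemma Hk_G k n : ((Hk P k n)%:R : R) = G n k n.
Proof.
rewrite /Hk /G -sum1_card natr_sum big_mkcond /=.
by apply: eq_bigr => t _; rewrite inE; case: ifP.
Qed.

Lemma G_step N k m :
  G N k.+1 m = \sum_(x : 'I_N.+1)
     \sum_(t : k.-tuple 'I_N.+1)
       (((x * \prod_(i <- t) (nat_of_ord i))%N == m) && P x && all (fun i : 'I_N.+1 => P i) t)%:R.
Proof.
rewrite /G pair_big /=.
rewrite (reindex (fun p : 'I_N.+1 * k.-tuple 'I_N.+1 => [tuple of p.1 :: p.2])) /=.
  by apply: eq_bigr => -[x t] _ /=; rewrite big_cons andbA.
exists (fun u => (thead u, [tuple of behead u])) => [[x t] _|u _] /=.
  by congr pair; apply: val_inj.
by rewrite -tuple_eta.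
Qed.

Hypothesis hP : forall x, P x -> (0 < x)%N.

Lemma G_step2 N k m :
  G N k.+1 m = \sum_(x : 'I_N.+1) (if P x && (x %| m)%N then G N k (m %/ x) else 0).
Proof.
rewrite G_step; apply: eq_bigr => x _.
case: (boolP (P x)) => Px /=; last by rewrite big1 // => t _; rewrite andbF.
have xp := hP _ Px.
case: (boolP (x %| m)%N) => xm /=; last first.
  rewrite big1 // => t _; case: eqP => //= E; move: xm; rewrite -E dvdn_mulr //.
apply: eq_bigr => t _; rewrite andbT.
by rewrite -{1}(divnK xm) mulnC eqn_pmul2r.
Qed.

Lemma G0 N j : G N 0 j = (j == 1)%N%:R.
Proof.
rewrite /G (eq_bigr (fun _ => (1 == j)%N%:R)); last first.
  by move=> t _; rewrite (tuple0 t) /= big_nil andbT.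
by rewrite sumr_const card_tuple expn0 mulr1n eq_sym.
Qed.

Lemma sum_eqm N m : \sum_(x : 'I_N.+1) ((nat_of_ord x == m)%:R : R) <= 1.
Proof.
case: (leqP m N) => hm.
  rewrite (bigD1 (inord m)) //= inordK // eqxx big1 ?addr0 // => x hx.
  case: eqP => // E; move: hx; rewrite -E inord_val eqxx //.
by rewrite big1 // => x _; case: eqP => // E; move: hm; rewrite -E ltnNge -ltnS ltn_ord.
Qed.

Variables (s : R) (rho : nat) (Z : R).
Hypotheses (hs : 0 <= s) (hrho : (0 < rho)%N) (hmin : forall m, P m -> (rho <= m)%N)
  (hZ : forall N, \sum_(x : 'I_N.+1) zetaP_term P s x <= Z) (hZ0 : 0 <= Z).

Lemma c_ge0 m : 0 <= m%:R `^ s / rho%:R `^ s.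
Proof. by rewrite divr_ge0 // powR_ge0. Qed.

Lemma c_ge1 m : (rho <= m)%N -> 1 <= m%:R `^ s / rho%:R `^ s.
Proof.
move=> hm; have rp : 0 < rho%:R `^ s :> R by rewrite powR_gt0 // ltr0n.
rewrite ler_pdivlMr // mul1r ge0_ler_powR // ?nnegrE ?ler0n // ler_nat //.
Qed.

Lemma bound N k : forall m, (1 <= m)%N -> G N k.+1 m <= Z ^+ k * (m%:R `^ s) / (rho%:R `^ s).
Proof.
elim: k => [|k IH] m m1.
  rewrite G_step2 expr0 mul1r.
  apply: le_trans (_ : \sum_(x : 'I_N.+1) ((nat_of_ord x == m)%:R * (m%:R `^ s / rho%:R `^ s)) <= _).
    apply: ler_sum => x _; case: ifP => [/andP[Px xm]|_]; last first.
      by rewrite mulr_ge0 ?c_ge0.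
    rewrite G0; case: eqP => [E|_]; last by rewrite mulr_ge0 ?c_ge0.
    have xE : nat_of_ord x = m by rewrite -(divnK xm) E mul1n.
    by rewrite xE eqxx mul1r c_ge1 // -xE hmin.
  rewrite -mulr_suml; apply: le_trans (_ : 1 * (m%:R `^ s / rho%:R `^ s) <= _).
    by rewrite ler_wpM2r ?c_ge0 ?sum_eqm.
  by rewrite mul1r.
rewrite G_step2.
apply: le_trans (_ : \sum_(x : 'I_N.+1) (Z ^+ k * (m%:R `^ s) / (rho%:R `^ s) * zetaP_term P s x) <= _).
  apply: ler_sum => x _; case: ifP => [/andP[Px xm]|_]; last first.
    by rewrite mulr_ge0 ?mulr_ge0 ?exprn_ge0 ?c_ge0 ?powR_ge0 ?invr_ge0 // /zetaP_term; case: ifP => // _; rewrite powR_ge0.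
  have xp := hP _ Px.
  have mx1 : (1 <= m %/ x)%N by rewrite divn_gt0 // dvdn_leq.
  apply: le_trans (IH _ mx1) _.
  have E : m%:R `^ s = (m %/ x)%:R `^ s * (nat_of_ord x)%:R `^ s :> R.
    by rewrite -powRM ?ler0n // -natrM divnK.
  have xs : (nat_of_ord x)%:R `^ s != 0 :> R by rewrite gt_eqF // powR_gt0 // ltr0n.
  rewrite E /zetaP_term Px powRN le_eqVlt; apply/orP; left; apply/eqP; field.
  by rewrite xs /= gt_eqF // powR_gt0 // ltr0n.
rewrite -mulr_sumr; apply: le_trans (_ : Z ^+ k * m%:R `^ s / rho%:R `^ s * Z <= _).
  by rewrite ler_wpM2l ?mulr_ge0 ?exprn_ge0 ?c_ge0 ?invr_ge0 ?powR_ge0.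
by rewrite exprSr le_eqVlt; apply/orP; left; apply/eqP; ring.
Qed.

End S.

Theorem lemma2p2 (R : realType) (P : pred nat) (rho : nat) (s : R) :
  (forall m, P m -> (2 <= m)%N) ->
  P rho -> (forall m, P m -> (rho <= m)%N) ->
  0 <= s -> (sigmaP P < s%:E)%E ->
  forall n k : nat, (2 <= n)%N -> (1 <= k)%N ->
  ((Hk P k n)%:R : R) <= zetaP P s ^+ (k - 1) * (n%:R `^ s) / (rho%:R `^ s).
Proof.
move=> hP2 Prho hmin hs hsig n k n2 k1.
have hP : forall x, P x -> (0 < x)%N by move=> x /hP2; apply: leq_trans.
have term_ge0 : forall (t : R) (m : nat), 0 <= zetaP_term P t m.
  move=> t m; rewrite /zetaP_term; case: ifP => _ //; exact: powR_ge0.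
have cv : cvgn (series (zetaP_term P s) : R^nat).
  case: (ereal_inf_lt hsig) => y [t ht <-]; rewrite lte_fin => ts.
  apply: (series_le_cvg _ _ _ ht) => // m.
  rewrite /zetaP_term; case: ifP => // Pm.
  apply: ler_powR; first by rewrite (ler_nat R 1 m) (leq_trans _ (hP2 _ Pm)).
  by rewrite lerN2 ltW.
have hZ : forall N, \sum_(x : 'I_N.+1) zetaP_term P s x <= zetaP P s.
  move=> N; have nd : nondecreasing_seq (series (zetaP_term P s)).
    exact: (@nondecreasing_series _ _ xpredT 0).
  have := nondecreasing_cvgn_le nd cv N.+1.
  by rewrite /zetaP /series /= big_mkord.
have hZ0 : 0 <= zetaP P s.
  by apply: le_trans (hZ 0%N); apply: sumr_ge0.
rewrite Hk_G; case: k k1 => // k _; rewrite subn1 /=.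
apply: bound => //; first by apply: leq_trans (hP2 _ Prho).
by apply: leq_trans n2.
Qed.
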